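(* Let $\mathrm{Alt}[x,y,z]$ be the free alternative algebra over a field on three free generators $x,y,z$. Then its Veronese $2$-subalgebra $V^{(2)}(\mathrm{Alt}[x,y,z])$ is not free in the variety $\mathrm{Alt}_3$.
   Context: An algebra is alternative if it satisfies $(x,x,y)=(y,x,x)=0$, where $(a,b,c)=(ab)c-a(bc)$. $\mathrm{Alt}_3$ is the subvariety of the variety of alternative algebras generated by the free alternative algebra of rank $3$. The Veronese $2$-subalgebra $V^{(2)}(\mathrm{Alt}[x,y,z])$ is the span of all monomials in $x,y,z$ of even length. An algebra is free in $\mathrm{Alt}_3$ if it is isomorphic to a free algebra of the variety $\mathrm{Alt}_3$ on some set of generators. *)

(* Defs.v *)
From mathcomp Require Import all_boot all_order all_algebra.
Set Implicit Arguments. Unset Strict Implicit. Unset Printing Implicit Defensive.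
Import GRing.Theory.
Local Open Scope ring_scope.

Record nalg (F : fieldType) := NAlg {
  nalg_car :> lmodType F;
  nmul : nalg_car -> nalg_car -> nalg_car;
  nmulDl : forall a b c, nmul (a + b) c = nmul a c + nmul b c;
  nmulDr : forall a b c, nmul a (b + c) = nmul a b + nmul a c;
  nmulZl : forall (k : F) a b, nmul (k *: a) b = k *: nmul a b;
  nmulZr : forall (k : F) a b, nmul a (k *: b) = k *: nmul a b
}.
Arguments nmul {F A} : rename.

Section Defs.
Variable F : fieldType.

Definition assoc (A : nalg F) (a b c : A) : A :=
  nmul (nmul a b) c - nmul a (nmul b c).

Definition alternative (A : nalg F) : Prop :=
  forall x y : A, assoc x x y = 0 /\ assoc y x x = 0.

Definition is_hom (A B : nalg F) (h : A -> B) : Prop :=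
  [/\ forall a b, h (a + b) = h a + h b,
      forall (k : F) a, h (k *: a) = k *: h a
    & forall a b, h (nmul a b) = nmul (h a) (h b)].

(* (A, g) is the free alternative algebra on the three free generators
   g 0, g 1, g 2 (= x, y, z): A is alternative and has the universal property
   among alternative algebras. *)
Definition is_free_alternative3 (A : nalg F) (g : 'I_3 -> A) : Prop :=
  alternative A /\
  forall (B : nalg F), alternative B -> forall b : 'I_3 -> B,
    exists h : A -> B,
      [/\ is_hom h, (forall i, h (g i) = b i)
        & forall h' : A -> B, is_hom h' -> (forall i, h' (g i) = b i) ->
            forall a, h' a = h a].

(* Nonassociative polynomials (terms) in the variables t_0, t_1, ... ,
   used to express polynomial identities. *)
Inductive nterm : Type :=
| NVar of nat
| NZero
| NAdd of nterm & nterm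
| NScale of F & nterm
| NMul of nterm & nterm.

Fixpoint neval (A : nalg F) (v : nat -> A) (t : nterm) : A :=
  match t with
  | NVar n => v n
  | NZero => 0
  | NAdd t1 t2 => neval v t1 + neval v t2
  | NScale k t1 => k *: neval v t1
  | NMul t1 t2 => nmul (neval v t1) (neval v t2)
  end.

Definition holds (A : nalg F) (t : nterm) : Prop :=
  forall v : nat -> A, neval v t = 0.

Definition holds_on (A : nalg F) (S : A -> Prop) (t : nterm) : Prop :=
  forall v : nat -> A, (forall n, S (v n)) -> neval v t = 0.

(* The variety generated by A is the variety defined by all identities of A;
   B belongs to it iff every identity of A is an identity of B. *)
Definition in_var_gen_by (A B : nalg F) : Prop :=
  forall t, holds A t -> holds B t.

Definition subalgebra (A : nalg F) (S : A -> Prop) : Prop :=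
  [/\ S 0, (forall a b, S a -> S b -> S (a + b)),
      (forall (k : F) a, S a -> S (k *: a))
    & (forall a b, S a -> S b -> S (nmul a b))].

Definition is_hom_on (A B : nalg F) (S : A -> Prop) (h : A -> B) : Prop :=
  [/\ forall a b, S a -> S b -> h (a + b) = h a + h b,
      forall (k : F) a, S a -> h (k *: a) = k *: h a
    & forall a b, S a -> S b -> h (nmul a b) = nmul (h a) (h b)].

Definition free_in_var_gen_by (G A : nalg F) (S : A -> Prop) : Prop :=
  subalgebra S /\ (forall t, holds G t -> holds_on S t) /\
  exists (X : Type) (e : X -> A), (forall x, S (e x)) /\
    forall B : nalg F, in_var_gen_by G B -> forall f : X -> B,
      exists h : A -> B,
        [/\ is_hom_on S h, (forall x, h (e x) = f x)
          & forall h' : A -> B, is_hom_on S h' -> (forall x, h' (e x) = f x) ->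
              forall a, S a -> h' a = h a].

Inductive monomial (A : nalg F) (g : 'I_3 -> A) : nat -> A -> Prop :=
| mon_gen i : monomial g 1 (g i)
| mon_mul m n a b : monomial g m a -> monomial g n b ->
                    monomial g (m + n) (nmul a b).

Inductive veronese2 (A : nalg F) (g : 'I_3 -> A) : A -> Prop :=
| ver_mon n a : monomial g n a -> ~~ odd n -> veronese2 g a
| ver_zero : veronese2 g 0
| ver_add a b : veronese2 g a -> veronese2 g b -> veronese2 g (a + b)
| ver_scale (k : F) a : veronese2 g a -> veronese2 g (k *: a).

End Defs.

(* Main.v *)
Require Import Defs.
From mathcomp Require Import all_boot all_order all_algebra.
From mathcomp Require Import ring.
Set Implicit Arguments. Unset Strict Implicit. Unset Printing Implicit Defensive.
Import GRing.Theory.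
Local Open Scope ring_scope.

Section ZR.
Variable V : zmodType.
Inductive zt := ZA of nat | Z0 | ZD of zt & zt | ZN of zt.
Fixpoint zev (env : seq V) t := match t with
 | ZA i => nth 0 env i | Z0 => 0 | ZD a b => zev env a + zev env b | ZN a => - zev env a end.
Fixpoint zco t (i : nat) : int := match t with
 | ZA j => (i == j)%:Z | Z0 => 0 | ZD a b => zco a i + zco b i | ZN a => - zco a i end.
Lemma zev_sum env t : zev env t = \sum_(i < size env) env`_i *~ zco t i.
Proof.
elim: t => [j||a IHa b IHb|a IHa] /=.
- have [jlt|jge] := ltnP j (size env).
  + rewrite (bigD1 (Ordinal jlt)) //= eqxx mulr1z big1 ?addr0 // => i /eqP ne.
    have -> : (i == j :> nat) = false by apply/negbTE/negP => /eqP h; apply: ne; exact: val_inj.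
    by rewrite mulr0z.
  + rewrite nth_default // big1 // => i _.
    have -> : (i == j :> nat) = false by apply/negbTE; rewrite neq_ltn (leq_trans (ltn_ord i) jge).
    by rewrite mulr0z.
- by rewrite big1 // => i _; rewrite mulr0z.
- by rewrite IHa IHb -big_split /=; apply: eq_bigr => i _; rewrite mulrzDr.
- by rewrite IHa -sumrN; apply: eq_bigr => i _; rewrite mulrNz.
Qed.
Lemma zsolve n env t1 t2 : size env = n -> all (fun i => zco t1 i == zco t2 i) (iota 0 n) ->
  zev env t1 = zev env t2.
Proof.
move=> <- /allP h; rewrite !zev_sum; apply: eq_bigr => i _.
by rewrite (eqP (h i _)) // mem_iota /= add0n ltn_ord.
Qed.
End ZR.

Ltac zlookup x l :=
  match l with
  | x :: _ => constr:(0%N)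
  | _ :: ?r => let n := zlookup x r in constr:(n.+1)
  end.
Ltac zmem x l :=
  match l with
  | x :: _ => constr:(true)
  | _ :: ?r => zmem x r
  | _ => constr:(false)
  end.
Ltac zcollect t l :=
  match t with
  | Algebra.add ?a ?b => let l1 := zcollect a l in zcollect b l1
  | Algebra.opp ?a => zcollect a l
  | Algebra.zero => l
  | _ => let b := zmem t l in
         match b with true => l | false => constr:(t :: l) end
  end.
Ltac zlen l := match l with | _ :: ?r => let n := zlen r in constr:(n.+1) | _ => constr:(0%N) end.
Ltac zreify t l :=
  match t with
  | Algebra.add ?a ?b => let ra := zreify a l in let rb := zreify b l in constr:(ZD ra rb)
  | Algebra.opp ?a => let ra := zreify a l in constr:(ZN ra)
  | Algebra.zero => constr:(Z0)
  | _ => let i := zlookup t l in constr:(ZA i)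
  end.
Ltac zgroup :=
  match goal with
  | |- ?lhs = ?rhs =>
    let T := type of lhs in
    let l0 := zcollect lhs (@nil T) in
    let l := zcollect rhs l0 in
    let r1 := zreify lhs l in let r2 := zreify rhs l in
    let n := zlen l in
    change (zev l r1 = zev l r2); apply: (@zsolve _ n); [reflexivity | vm_compute; reflexivity]
  end.

Section AlgLemmas.
Variable F : fieldType.
Variable A : nalg F.
Implicit Types a b c d x y z : A.

Lemma nmul0l b : nmul (0 : A) b = 0.
Proof. by apply: (addrI (nmul (0:A) b)); rewrite -nmulDl !addr0. Qed.
Lemma nmul0r b : nmul b (0 : A) = 0.
Proof. by apply: (addrI (nmul b (0:A))); rewrite -nmulDr !addr0. Qed.
Lemma nmulNl a b : nmul (- a) b = - nmul a b.
Proof. by apply: (addrI (nmul a b)); rewrite -nmulDl !subrr nmul0l. Qed.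
Lemma nmulNr a b : nmul a (- b) = - nmul a b.
Proof. by apply: (addrI (nmul a b)); rewrite -nmulDr !subrr nmul0r. Qed.
Lemma nmulBl a b c : nmul (a - b) c = nmul a c - nmul b c.
Proof. by rewrite nmulDl nmulNl. Qed.
Lemma nmulBr a b c : nmul c (a - b) = nmul c a - nmul c b.
Proof. by rewrite nmulDr nmulNr. Qed.

Lemma assocDl a b c d : assoc (a + b) c d = assoc a c d + assoc b c d.
Proof. rewrite /assoc !nmulDl; zgroup. Qed.
Lemma assocDm a b c d : assoc c (a + b) d = assoc c a d + assoc c b d.
Proof. rewrite /assoc !nmulDl !nmulDr !nmulDl; zgroup. Qed.
Lemma assocDr a b c d : assoc c d (a + b) = assoc c d a + assoc c d b.
Proof. rewrite /assoc !nmulDr; zgroup. Qed.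

Lemma teich a b c d :
  assoc (nmul a b) c d - assoc a (nmul b c) d + assoc a b (nmul c d) =
  nmul a (assoc b c d) + nmul (assoc a b c) d.
Proof. rewrite /assoc !nmulBl !nmulBr; zgroup. Qed.

Hypothesis altA : alternative A.

Lemma alt1 a b : assoc a a b = 0. Proof. by case: (altA a b). Qed.
Lemma alt2 a b : assoc b a a = 0. Proof. by case: (altA a b). Qed.

Lemma C12 a b c : assoc a b c = - assoc b a c.
Proof.
apply/eqP; rewrite -addr_eq0; apply/eqP.
by have := alt1 (a + b) c; rewrite assocDl !assocDm !alt1 add0r addr0.
Qed.
Lemma C23 a b c : assoc a b c = - assoc a c b.
Proof.
apply/eqP; rewrite -addr_eq0; apply/eqP.
have := alt2 (b + c) a; rewrite assocDr !assocDm !alt2 add0r addr0 => h.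
by rewrite addrC.
Qed.
Lemma cyc a b c : assoc a b c = assoc b c a.
Proof. by rewrite C12 C23 opprK. Qed.
Lemma flex a b : assoc a b a = 0.
Proof. by rewrite C23 alt1 oppr0. Qed.

Lemma I2 x y z : assoc x y (nmul x z) = nmul (assoc x y z) x.
Proof.
set P := assoc x y (nmul x z).
set Q := assoc x y (nmul z x).
set R := assoc x (nmul x y) z.
set S := assoc x (nmul y x) z.
set L := nmul x (assoc x y z).
set M := nmul (assoc x y z) x.
set K := assoc (nmul x x) y z.
have T1 : Q - K + R = 0.
  have := teich z x x y; rewrite alt1 alt2 nmul0r nmul0l addr0.
  have -> : assoc (nmul z x) x y = Q by rewrite cyc.
  have -> : assoc z (nmul x x) y = K by rewrite cyc.
  by have -> : assoc z x (nmul x y) = R by rewrite cyc.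
have T2 : K - R = L.
  by have := teich x x y z; rewrite !alt1 nmul0l !addr0.
have T3 : - Q + K = M.
  have := teich y z x x; rewrite !alt2 nmul0r !add0r.
  have -> : assoc y (nmul z x) x = Q by rewrite cyc cyc.
  have -> : assoc y z (nmul x x) = K by rewrite cyc cyc.
  by have -> : assoc y z x = assoc x y z by rewrite cyc cyc.
have T4 : - Q + R + S = M.
  have := teich z x y x; rewrite flex nmul0r !add0r.
  have -> : assoc (nmul z x) y x = - Q by rewrite C23 cyc.
  have -> : assoc z (nmul x y) x = - R by rewrite C23 cyc.
  have -> : assoc z x (nmul y x) = S by rewrite cyc.
  have -> : assoc z x y = assoc x y z by rewrite cyc.
  by rewrite opprK.
have T5 : - S + K - P = 0.
  have := teich y x x z; rewrite alt1 alt2 nmul0r nmul0l addr0.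
  have -> : assoc (nmul y x) x z = - S by rewrite C12.
  have -> : assoc y (nmul x x) z = - K by rewrite C12.
  have -> : assoc y x (nmul x z) = - P by rewrite C12.
  by rewrite opprK.
have eP : P = - S + K.
  by transitivity (P + (- S + K - P)); [rewrite T5 addr0 | zgroup].
have eS : S = M + Q - R by rewrite -T4; zgroup.
have eQ : Q = K - R.
  by transitivity (Q - (Q - K + R)); [rewrite T1 subr0 | zgroup].
have eM : M = R.
  rewrite -T3 eQ; zgroup.
rewrite eP eS eQ eM; zgroup.
Qed.

Lemma key x y : assoc (nmul x x) (nmul x y) (nmul y y) = 0.
Proof.
have sA : assoc y x (nmul y y) = 0 by rewrite I2 flex nmul0l.
have sB : assoc x (nmul y y) y = 0 by rewrite cyc cyc.
have sC : assoc x (nmul y y) (nmul x y) = 0 by rewrite I2 sB nmul0l.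
have sD : assoc x (nmul x y) (nmul y y) = 0 by rewrite C23 sC oppr0.
have I3 : assoc (nmul x x) (nmul x y) (nmul y y) =
  assoc x (nmul x (nmul x y)) (nmul y y) + nmul x (assoc x (nmul x y) (nmul y y)).
  have := teich x x (nmul x y) (nmul y y); rewrite !alt1 nmul0l !addr0 => <-; zgroup.
rewrite I3 sD nmul0r addr0 C23 I2 sC nmul0l oppr0 //.
Qed.
End AlgLemmas.

Lemma scaleo (F : fieldType) (k : F) (a : F^o) : k *: a = k * a. Proof. by []. Qed.
Ltac pcomp := repeat (apply: injective_projections => /=);
  rewrite ?scaleo ?scaler0 ?addr0 ?add0r ?mulr0 ?mul0r ?subr0 ?oppr0 //; try ring.

Section Concrete.
Variable F : fieldType.

Definition F2 : lmodType F := (F^o * F^o)%type.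
Definition F3 : lmodType F := (F^o * F^o * F^o)%type.
Definition cross (a b : F3) : F3 :=
  (a.1.2 * b.2 - a.2 * b.1.2, a.2 * b.1.1 - a.1.1 * b.2, a.1.1 * b.1.2 - a.1.2 * b.1.1).
Definition dot (a b : F3) : F^o := a.1.1 * b.1.1 + a.1.2 * b.1.2 + a.2 * b.2.

(* B : truncated polynomial algebra in x, y *)
Definition BT : lmodType F := (F2 * F3)%type.
Definition bmul (a b : BT) : BT :=
  (0, (a.1.1 * b.1.1, a.1.1 * b.1.2 + a.1.2 * b.1.1, a.1.2 * b.1.2)).

Lemma bmulDl a b c : bmul (a + b) c = bmul a c + bmul b c.
Proof.
case: a => [[a1 a2] [[a3 a4] a5]]; case: b => [[b1 b2] [[b3 b4] b5]];
case: c => [[c1 c2] [[c3 c4] c5]]; rewrite /bmul; pcomp.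
Qed.
Lemma bmulDr a b c : bmul a (b + c) = bmul a b + bmul a c.
Proof.
case: a => [[a1 a2] [[a3 a4] a5]]; case: b => [[b1 b2] [[b3 b4] b5]];
case: c => [[c1 c2] [[c3 c4] c5]]; rewrite /bmul; pcomp.
Qed.
Lemma bmulZl (k : F) a b : bmul (k *: a) b = k *: bmul a b.
Proof.
case: a => [[a1 a2] [[a3 a4] a5]]; case: b => [[b1 b2] [[b3 b4] b5]]; rewrite /bmul; pcomp.
Qed.
Lemma bmulZr (k : F) a b : bmul a (k *: b) = k *: bmul a b.
Proof.
case: a => [[a1 a2] [[a3 a4] a5]]; case: b => [[b1 b2] [[b3 b4] b5]]; rewrite /bmul; pcomp.
Qed.
Definition Balg : nalg F := NAlg bmulDl bmulDr bmulZl bmulZr.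

Lemma altB : alternative Balg.
Proof.
move=> a b; rewrite /assoc /=.
case: a => [[a1 a2] [[a3 a4] a5]]; case: b => [[b1 b2] [[b3 b4] b5]];
split; rewrite /bmul; pcomp.
Qed.

(* C : nilpotent alternative algebra with nonzero associator *)
Definition CT : lmodType F := (F3 * F3 * F^o)%type.
Definition cmul (a b : CT) : CT := (0, cross a.1.1 b.1.1, dot a.1.2 b.1.1).

Ltac cdes a := case: a => [[[[? ?] ?] [[? ?] ?]] ?].

Lemma cmulDl a b c : cmul (a + b) c = cmul a c + cmul b c.
Proof. cdes a; cdes b; cdes c; rewrite /cmul /cross /dot; pcomp. Qed.
Lemma cmulDr a b c : cmul a (b + c) = cmul a b + cmul a c.
Proof. cdes a; cdes b; cdes c; rewrite /cmul /cross /dot; pcomp. Qed.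
Lemma cmulZl (k : F) a b : cmul (k *: a) b = k *: cmul a b.
Proof. cdes a; cdes b; rewrite /cmul /cross /dot; pcomp. Qed.
Lemma cmulZr (k : F) a b : cmul a (k *: b) = k *: cmul a b.
Proof. cdes a; cdes b; rewrite /cmul /cross /dot; pcomp. Qed.
Definition Calg : nalg F := NAlg cmulDl cmulDr cmulZl cmulZr.

Lemma altC : alternative Calg.
Proof.
move=> a b; rewrite /assoc /=.
cdes a; cdes b; split; rewrite /cmul /cross /dot; pcomp.
Qed.

End Concrete.

Section HomLemmas.
Variable F : fieldType.

Lemma hom0 (A B : nalg F) (h : A -> B) : is_hom h -> h 0 = 0.
Proof. by case=> _ hZ _; rewrite -(scale0r (0:A)) hZ scale0r. Qed.

Lemma neval_ext (A : nalg F) (v w : nat -> A) t :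
  (forall n, v n = w n) -> neval v t = neval w t.
Proof. by move=> E; elim: t => [n||a IHa b IHb|k a IHa|a IHa b IHb] //=; rewrite ?IHa ?IHb. Qed.

Lemma hom_neval (A B : nalg F) (h : A -> B) v t : is_hom h ->
  h (neval v t) = neval (fun n => h (v n)) t.
Proof.
case=> hA hZ hM; elim: t => [n||a IHa b IHb|k a IHa|a IHa b IHb] //=.
- by apply: hom0.
- by rewrite hA IHa IHb.
- by rewrite hZ IHa.
- by rewrite hM IHa IHb.
Qed.

Lemma var_surj (A B : nalg F) (h : A -> B) (s : B -> A) :
  is_hom h -> (forall b, h (s b) = b) -> in_var_gen_by A B.
Proof.
move=> hh hs t Ht v.
rewrite (neval_ext (w := fun n => h (s (v n)))) // -hom_neval // Ht.
exact: hom0.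
Qed.

Lemma hom_hom_on (A B : nalg F) (S : A -> Prop) (h : A -> B) : is_hom h -> is_hom_on S h.
Proof. by case=> hA hZ hM; split=> *; rewrite ?hA ?hZ ?hM. Qed.

Lemma homon0 (A B : nalg F) (S : A -> Prop) (h : A -> B) :
  subalgebra S -> is_hom_on S h -> h 0 = 0.
Proof.
case=> S0 _ _ _ [hA _ _].
by apply: (addrI (h 0)); rewrite -hA // !addr0.
Qed.

Lemma homonB (A B : nalg F) (S : A -> Prop) (h : A -> B) a b :
  subalgebra S -> is_hom_on S h -> S a -> S b -> h (a - b) = h a - h b.
Proof.
case=> S0 SD SZ SM [hA hZ hM] Sa Sb.
have Snb : S ((-1) *: b) by apply: SZ.
by rewrite -scaleN1r hA // hZ // scaleN1r.
Qed.

Lemma homon_assoc (A B : nalg F) (S : A -> Prop) (h : A -> B) a b c :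
  subalgebra S -> is_hom_on S h -> S a -> S b -> S c ->
  h (assoc a b c) = assoc (h a) (h b) (h c).
Proof.
move=> sS hh Sa Sb Sc; have [S0 SD SZ SM] := sS; have [hA hZ hM] := hh.
have Sab := SM _ _ Sa Sb; have Sbc := SM _ _ Sb Sc.
rewrite /assoc (homonB sS hh (SM _ _ Sab Sc) (SM _ _ Sa Sbc)).
by rewrite hM // hM // hM // hM.
Qed.
End HomLemmas.

Lemma assocC2 (F : fieldType) (a b c : Calg F) :
  (assoc a b c).2 = dot (cross a.1.1 b.1.1) c.1.1.
Proof.
case: a => [[[[? ?] ?] [[? ?] ?]] ?]; case: b => [[[[? ?] ?] [[? ?] ?]] ?];
case: c => [[[[? ?] ?] [[? ?] ?]] ?].
rewrite /assoc /= /cmul /cross /dot /=; ring.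
Qed.

Theorem proposition2 (F : fieldType) (A : nalg F) (g : 'I_3 -> A) :
  is_free_alternative3 g -> ~ free_in_var_gen_by A (veronese2 g).
Proof.
move=> [altA univ] [subS [_ [X [e [eS univS]]]]].
set x := g (@Ordinal 3 0 isT).
set y := g (@Ordinal 3 1 isT).
set z := g (@Ordinal 3 2 isT).
pose bB : 'I_3 -> Balg F := fun i =>
  if val i == 0%N then ((1, 0), 0) else if val i == 1%N then ((0, 1), 0) else 0.
have [pi [hpi pig _]] := univ (Balg F) (@altB F) bB.
have pix : pi x = ((1, 0), 0) by rewrite pig.
have piy : pi y = ((0, 1), 0) by rewrite pig.
have VarB : in_var_gen_by A (Balg F).
  apply: (var_surj (h := pi) (s := fun b : Balg F => b.1.1 *: x + b.1.2 *: y +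
     b.2.1.1 *: nmul x x + b.2.1.2 *: nmul x y + b.2.2 *: nmul y y)) => // b.
  have [hA hZ hM] := hpi.
  rewrite !hA !hZ !hM pix piy.
  case: b => [[b1 b2] [[b3 b4] b5]] /=; rewrite /bmul; pcomp.
pose e1 : F3 F := ((1, 0), 0).
pose e2 : F3 F := ((0, 1), 0).
pose e3 : F3 F := ((0, 0), 1).
pose bC : 'I_3 -> Calg F := fun i =>
  if val i == 0%N then ((e1, 0), 0) else if val i == 1%N then ((e2, 0), 0) else ((e3, 0), 0).
have [pc [hpc pcg _]] := univ (Calg F) (@altC F) bC.
have pcx : pc x = ((e1, 0), 0) by rewrite pcg.
have pcy : pc y = ((e2, 0), 0) by rewrite pcg.
have pcz : pc z = ((e3, 0), 0) by rewrite pcg.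
have VarC : in_var_gen_by A (Calg F).
  apply: (var_surj (h := pc) (s := fun c : Calg F =>
     c.1.1.1.1 *: x + c.1.1.1.2 *: y + c.1.1.2 *: z +
     c.1.2.1.1 *: nmul y z + c.1.2.1.2 *: nmul z x + c.1.2.2 *: nmul x y +
     c.2 *: nmul (nmul x y) z)) => // c.
  have [hA hZ hM] := hpc.
  rewrite !hA !hZ !hM pcx pcy pcz.
  case: c => [[[[c1 c2] c3] [[c4 c5] c6]] c7] /=; rewrite /cmul /cross /dot /e1 /e2 /e3; pcomp.
have [hpA hpZ hpM] := hpi.
have piV : forall a, veronese2 g a -> (pi a).1 = 0.
  move=> a; elim => [n a0 m ev | | a1 b1 _ ha _ hb | k a1 _ ha].
  - by case: m ev => [i | m1 n1 a2 b2 _ _] //= _; rewrite hpM.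
  - by rewrite (hom0 hpi).
  - by rewrite hpA /= ha hb addr0.
  - by rewrite hpZ /= ha scaler0.
have [h0 [h0hom h0e uniq0]] := univS (Balg F) VarB (fun u => pi (e u)).
have piS : forall a, veronese2 g a -> pi a = h0 a.
  by apply: uniq0 => //; apply: hom_hom_on.
pose f : X -> Calg F := fun u => (((pi (e u)).2, 0), 0).
have [phi [hphi phie _]] := univS (Calg F) VarC f.
pose psi : A -> Balg F := fun a => (0, (phi a).1.1).
have hpsi : is_hom_on (veronese2 g) psi.
  have [pA pZ pM] := hphi; split.
  - by move=> a b Sa Sb; rewrite /psi pA //; pcomp.
  - by move=> k a Sa; rewrite /psi pZ //; pcomp.
  - by move=> a b Sa Sb; rewrite /psi pM //; pcomp.
have psiS : forall a, veronese2 g a -> psi a = h0 a.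
  apply: uniq0 => // u; rewrite /psi phie /=.
  by apply: injective_projections => //=; rewrite piV.
have key1 : forall a, veronese2 g a -> (phi a).1.1 = (pi a).2.
  by move=> a Sa; have := congr1 snd (etrans (psiS a Sa) (esym (piS a Sa))).
have Sxx : veronese2 g (nmul x x) by apply: (@ver_mon _ _ _ 2) => //; apply: (mon_mul (mon_gen _ _) (mon_gen _ _)).
have Sxy : veronese2 g (nmul x y) by apply: (@ver_mon _ _ _ 2) => //; apply: (mon_mul (mon_gen _ _) (mon_gen _ _)).
have Syy : veronese2 g (nmul y y) by apply: (@ver_mon _ _ _ 2) => //; apply: (mon_mul (mon_gen _ _) (mon_gen _ _)).
have H := homon_assoc subS hphi Sxx Sxy Syy.
rewrite key // (homon0 subS hphi) in H.
have := congr1 snd H; rewrite assocC2 !key1 // !hpM pix piy /=.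
rewrite /dot /cross /bmul /=.
move=> H1; move/eqP: (oner_neq0 F); apply; rewrite H1; ring.
Qed.
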